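(* Let $F_n$ be the free group on $f_1,\dots,f_n$, $g=f_1\cdots f_n$, $R$ the set of conjugates of $f_1,\dots,f_n$. For every $\tau\in B_n$, the automorphism $a\mapsto\tau\star a$ of $F_n$ restricts to a poset isomorphism $([1,g]_R,\le_R)\to([1,g]_R,\le_R)$.
   Context: For a group $G$ with generating set $X$: $\ell_X(a)$ is the minimal $k$ with $a=x_1\cdots x_k$, $x_i\in X\cup X^{-1}$; $a\le_X b$ iff $\ell_X(a)+\ell_X(a^{-1}b)=\ell_X(b)$; $[1,b]_X=\{a:a\le_Xb\}$. The braid group $B_n=\langle\sigma_1,\dots,\sigma_{n-1}\rangle$ acts on $F_n$ by automorphisms (denoted $\tau\star a$), where $\sigma_i$ acts by $\sigma_i\star f_i=f_{i+1}$, $\sigma_i\star f_{i+1}=f_{i+1}^{-1}f_if_{i+1}$, and $\sigma_i\star f_j=f_j$ for $j\notin\{i,i+1\}$; equivalently this is the action of $B_n$, viewed as the mapping class group of the $n$-punctured disk relative to its boundary, on its fundamental group $F_n$. *)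

(* Defs.v *)
(* Free group F_n as words over letters (index, inverted?),
   generators f_1..f_n encoded as indices 0..n-1; group elements are words
   compared up to free reduction. *)
From mathcomp Require Import all_boot.
Set Implicit Arguments. Unset Strict Implicit. Unset Printing Implicit Defensive.

(* a letter (j, b): f_{j+1} if b = false, f_{j+1}^{-1} if b = true *)
Definition letter := (nat * bool)%type.
Definition word := seq letter.

Definition wordn (n : nat) (w : word) : bool := all (fun x => x.1 < n) w.

Definition inv_letter (x : letter) : letter := (x.1, ~~ x.2).
Definition winv (w : word) : word := rev (map inv_letter w).

Definition push (x : letter) (s : word) : word :=
  match s with
  | y :: s' => if y == inv_letter x then s' else x :: s
  | [::] => [:: x]
  end.
Definition reduce (w : word) : word := foldr push [::] w.

Definition weq (u v : word) : bool := reduce u == reduce v.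

(* u is in R ∪ R^{-1}, R = conjugates of the generators f_1..f_n:
   u = w^{-1} f_{i+1}^{±1} w *)
Definition inRR (n : nat) (u : word) : Prop :=
  exists (i : nat) (w : word) (b : bool),
    i < n /\ wordn n w /\ weq u (winv w ++ (i, b) :: w).

Definition prodR (n : nat) (k : nat) (a : word) : Prop :=
  exists xs : seq word,
    size xs = k /\ (forall x, x \in xs -> inRR n x) /\ weq (flatten xs) a.

Definition ellR (n : nat) (a : word) (k : nat) : Prop :=
  prodR n k a /\ forall m, prodR n m a -> k <= m.

Definition leR (n : nat) (a b : word) : Prop :=
  exists ka kab kb, ellR n a ka /\ ellR n (winv a ++ b) kab /\ ellR n b kb /\
                    ka + kab = kb.

Definition gcox (n : nat) : word := [seq (j, false) | j <- iota 0 n].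

Definition inI (n : nat) (a : word) : Prop := leR n a (gcox n).

(* Braid action. A braid generator (i, e) stands for sigma_{i+1}^{±1}
   (e = false: sigma, e = true: sigma^{-1}), requiring i.+1 < n. *)
Definition gen_image (s : nat * bool) (j : nat) : word :=
  let: (i, e) := s in
  if ~~ e then
    (if j == i then [:: (i.+1, false)]
     else if j == i.+1 then [:: (i.+1, true); (i, false); (i.+1, false)]
     else [:: (j, false)])
  else
    (if j == i.+1 then [:: (i, false)]
     else if j == i then [:: (i, false); (i.+1, false); (i, true)]
     else [:: (j, false)]).

Definition act_letter (s : nat * bool) (x : letter) : word :=
  if x.2 then winv (gen_image s x.1) else gen_image s x.1.

Definition act_gen (s : nat * bool) (w : word) : word :=
  flatten (map (act_letter s) w).

(* a braid tau given as a word s_1 s_2 ... s_k in the generators;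
   tau * a = s_1 * (s_2 * ( ... (s_k * a))) *)
Fixpoint bact (tau : seq (nat * bool)) (w : word) : word :=
  match tau with
  | [::] => w
  | s :: tau' => act_gen s (bact tau' w)
  end.

Definition braid_word (n : nat) (tau : seq (nat * bool)) : bool :=
  all (fun s => s.1.+1 < n) tau.

(* Main.v *)
Require Import Defs.
From mathcomp Require Import all_boot.
Set Implicit Arguments. Unset Strict Implicit. Unset Printing Implicit Defensive.

Lemma inv_letterK x : inv_letter (inv_letter x) = x.
Proof. by case: x => a []. Qed.

Lemma winvK w : winv (winv w) = w.
Proof.
rewrite /winv map_rev revK -map_comp.
by rewrite (@eq_map _ _ _ id) ?map_id // => x /=; rewrite inv_letterK.
Qed.

Lemma winv_cat u v : winv (u ++ v) = winv v ++ winv u.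
Proof. by rewrite /winv map_cat rev_cat. Qed.

Lemma winv_cons x u : winv (x :: u) = winv u ++ [:: inv_letter x].
Proof. by rewrite /winv map_cons rev_cons cats1. Qed.

Fixpoint reduced (s : word) : bool :=
  match s with
  | x :: ((y :: _) as s') => (y != inv_letter x) && reduced s'
  | _ => true
  end.

Lemma reduced_tail y s : reduced (y :: s) -> reduced s.
Proof. by case: s => //= z s /andP[]. Qed.

Lemma push_reduced x s : reduced s -> reduced (push x s).
Proof.
case: s => [|y s] //= Hs.
case: eqP => Hy; first exact: reduced_tail Hs.
by rewrite /= Hs andbT; apply/eqP.
Qed.

Lemma reduce_reduced w : reduced (reduce w).
Proof. by elim: w => //= x w IH; apply: push_reduced. Qed.

Lemma push_inv x s : reduced s -> push x (push (inv_letter x) s) = s.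
Proof.
case: s => [|y s] /=; first by rewrite eqxx.
rewrite inv_letterK.
case: eqP => [->|Hy].
  case: s => [|z s] //= /andP[Hz _].
  by rewrite (negbTE Hz).
by rewrite /= eqxx.
Qed.

Lemma reduce_cat u v : reduce (u ++ v) = foldr push (reduce v) u.
Proof. by rewrite /reduce foldr_cat. Qed.

Lemma reduce_push_cat x w v : reduce (push x w ++ v) = push x (reduce (w ++ v)).
Proof.
case: w => [|y w] //=.
case: (y =P inv_letter x) => [->|_] //=.
by rewrite push_inv // reduce_reduced.
Qed.

Lemma reduce_reduce_cat u v : reduce (reduce u ++ v) = reduce (u ++ v).
Proof.
elim: u => [|x u IH] //=.
by rewrite reduce_push_cat IH.
Qed.

Lemma weq_refl u : weq u u. Proof. exact: eqxx. Qed.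
Lemma weq_sym u v : weq u v -> weq v u. Proof. by rewrite /weq eq_sym. Qed.
Lemma weq_trans u v w : weq u v -> weq v w -> weq u w.
Proof. by rewrite /weq => /eqP -> /eqP ->. Qed.

Lemma weq_catr u u' v : weq u u' -> weq (u ++ v) (u' ++ v).
Proof. by rewrite /weq -reduce_reduce_cat -[reduce (u' ++ v)]reduce_reduce_cat => /eqP ->. Qed.

Lemma weq_catl u v v' : weq v v' -> weq (u ++ v) (u ++ v').
Proof. by rewrite /weq !reduce_cat => /eqP ->. Qed.

Lemma reduce_cancel u v : reduce (u ++ winv u ++ v) = reduce v.
Proof.
elim: u v => [|x u IH] v //=.
rewrite winv_cons -catA IH /=.
by rewrite push_inv // reduce_reduced.
Qed.

Lemma reduce_cancel' u v : reduce (winv u ++ u ++ v) = reduce v.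
Proof. by have := reduce_cancel (winv u) v; rewrite winvK. Qed.

Lemma weq_winv u v : weq u v -> weq (winv u) (winv v).
Proof.
move=> H.
apply: (@weq_trans _ (winv u ++ v ++ winv v ++ [::])).
  by rewrite -{1}[winv u]cats0; apply: weq_catl; rewrite /weq reduce_cancel.
apply: (@weq_trans _ (winv u ++ u ++ winv v ++ [::])).
  by apply: weq_catl; apply: weq_catr; apply: weq_sym.
by rewrite /weq reduce_cancel' cats0.
Qed.

Definition hom (h : word -> word) :=
  (forall u v, h (u ++ v) = h u ++ h v) /\ h [::] = [::] /\
  (forall x, h [:: inv_letter x] = winv (h [:: x])).

Lemma hom_cons h x u : hom h -> h (x :: u) = h [:: x] ++ h u.
Proof. by move=> [Hc _]; rewrite -Hc. Qed.

Lemma hom_winv h w : hom h -> h (winv w) = winv (h w).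
Proof.
move=> Hh; have [Hc [H0 Hi]] := Hh.
elim: w => [|x w IH]; first by rewrite /winv /= H0.
by rewrite winv_cons Hc IH Hi (hom_cons x w Hh) winv_cat.
Qed.

Lemma hom_push h x s : hom h -> weq (h (x :: s)) (h (push x s)).
Proof.
move=> Hh; have [Hc [H0 Hi]] := Hh.
case: s => [|y s] /=; first exact: weq_refl.
case: (y =P inv_letter x) => [->|_]; last exact: weq_refl.
rewrite (hom_cons x _ Hh) (hom_cons (inv_letter x) s Hh) Hi.
by rewrite /weq reduce_cancel.
Qed.

Lemma hom_reduce h u : hom h -> weq (h u) (h (reduce u)).
Proof.
move=> Hh; elim: u => [|x u IH] /=; first exact: weq_refl.
apply: (@weq_trans _ (h (x :: reduce u))); last exact: hom_push.
by rewrite (hom_cons x u Hh) (hom_cons x (reduce u) Hh); apply: weq_catl.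
Qed.

Lemma hom_weq h u v : hom h -> weq u v -> weq (h u) (h v).
Proof.
move=> Hh /eqP E.
apply: (weq_trans (hom_reduce _ Hh)); rewrite E.
exact/weq_sym/hom_reduce.
Qed.

Lemma hom_comp h1 h2 : hom h1 -> hom h2 -> hom (fun w => h2 (h1 w)).
Proof.
move=> [C1 [Z1 I1]] H2; have [C2 [Z2 I2]] := H2.
split; first by move=> u v; rewrite C1 C2.
split; first by rewrite Z1 Z2.
by move=> x; rewrite I1 hom_winv.
Qed.

Lemma hom_flatten h xs : hom h -> h (flatten xs) = flatten (map h xs).
Proof.
move=> [C [Z _]]; elim: xs => [|x xs IH] //=.
by rewrite C IH.
Qed.

Lemma hom_id_weq h : hom h -> (forall x, weq (h [:: x]) [:: x]) ->
  forall w, weq (h w) w.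
Proof.
move=> Hh Hx; elim=> [|x w IH]; first by case: Hh => _ [-> _]; exact: weq_refl.
rewrite (hom_cons x w Hh).
apply: (@weq_trans _ ([:: x] ++ h w)); first exact: weq_catr.
exact: weq_catl.
Qed.

Lemma act_gen_hom s : hom (act_gen s).
Proof.
split; first by move=> u v; rewrite /act_gen map_cat flatten_cat.
split=> // x; rewrite /act_gen /= !cats0.
case: x => j [] /=; by rewrite ?winvK.
Qed.

Lemma bact_hom tau : hom (bact tau).
Proof.
elim: tau => [|s tau IH] /=.
  by split=> //; split.
exact: (hom_comp IH (act_gen_hom s)).
Qed.

Definition flip (s : nat * bool) : nat * bool := (s.1, ~~ s.2).

Lemma neqS i : (i.+1 == i) = false. Proof. by elim: i. Qed.
Lemma neqS' i : (i == i.+1) = false. Proof. by elim: i. Qed.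

Ltac prephyps := repeat match goal with H : is_true (?a != ?b) |- _ =>
  move/negbTE: H => H end.
Ltac rwhyps := repeat (match goal with H : (?a == ?b) = false |- context [?a == ?b] => rewrite H end).

Ltac wsimp := do 6 (rewrite /= /inv_letter /push /act_letter /gen_image ?xpair_eqE ?eqxx ?neqS ?neqS' ?andbT ?andbF /=; rwhyps).

Lemma act_flip_gen s j :
  weq (act_gen (flip s) (act_gen s [:: (j, false)])) [:: (j, false)].
Proof.
case: s => i e; rewrite /act_gen /flip /=.
case: e => /=;
case: (eqVneq j i.+1) => [->|H1];
try case: (eqVneq j i) => [->|H2]; prephyps;
rewrite /weq; wsimp; done.
Qed.

Lemma winv1 x : winv [:: x] = [:: inv_letter x].
Proof. by []. Qed.

Lemma act_flip_weq s w : weq (act_gen (flip s) (act_gen s w)) w.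
Proof.
have Hh := hom_comp (act_gen_hom s) (act_gen_hom (flip s)).
apply: (hom_id_weq Hh) => -[j b].
case: b; last exact: act_flip_gen.
have -> : (j, true) = inv_letter (j, false) by [].
case: Hh => _ [_ ->]; rewrite -winv1; apply: weq_winv; exact: act_flip_gen.
Qed.

Lemma flipK s : flip (flip s) = s.
Proof. by case: s => i []. Qed.

Definition binv (tau : seq (nat * bool)) := rev (map flip tau).

Lemma binvK tau : binv (binv tau) = tau.
Proof.
rewrite /binv map_rev revK -map_comp.
by rewrite (@eq_map _ _ _ id) ?map_id // => x /=; rewrite flipK.
Qed.

Lemma bact_cat t1 t2 w : bact (t1 ++ t2) w = bact t1 (bact t2 w).
Proof. by elim: t1 => //= s t1 ->. Qed.

Lemma bact_binv tau w : weq (bact (binv tau) (bact tau w)) w.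
Proof.
elim: tau w => [|s tau IH] w /=; first exact: weq_refl.
rewrite /binv map_cons rev_cons -cats1 bact_cat /=.
apply: weq_trans (IH w).
apply: hom_weq; first exact: bact_hom.
exact: act_flip_weq.
Qed.

Lemma bact_binv' tau w : weq (bact tau (bact (binv tau) w)) w.
Proof. by have := bact_binv (binv tau) w; rewrite binvK. Qed.

Lemma wordn_cat n u v : wordn n (u ++ v) = wordn n u && wordn n v.
Proof. exact: all_cat. Qed.

Lemma wordn_winv n u : wordn n (winv u) = wordn n u.
Proof.
elim: u => [|x u IH] //; rewrite winv_cons wordn_cat IH /= andbT andbC.
by case: x.
Qed.

Lemma wordn_gen n i e j : i.+1 < n -> j < n -> wordn n (gen_image (i, e) j).
Proof.
move=> hi hj; have hi' := ltnW hi.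
rewrite /gen_image; case: e; case: eqP => _; try case: eqP => _;
by rewrite /wordn /= ?hi ?hi' ?hj.
Qed.

Lemma wordn_act n s w : s.1.+1 < n -> wordn n w -> wordn n (act_gen s w).
Proof.
case: s => i e /= hi; have hi' := ltnW hi.
elim: w => [|[j b] w IH] //= /andP[/= hj hw].
rewrite wordn_cat IH // andbT.
have H := wordn_gen e hi hj.
by rewrite /act_letter; case: b => //=; rewrite wordn_winv.
Qed.

Lemma gen_conj n s k : s.1.+1 < n -> k < n ->
  exists c k', [/\ k' < n, wordn n c &
    weq (act_gen s [:: (k, false)]) (winv c ++ (k', false) :: c)].
Proof.
case: s => i e /= hi hk; have hi' := ltnW hi.
rewrite /act_gen /= /act_letter /= cats0 /gen_image.
case: e => /=.
- case: (eqVneq k i.+1) => [_|H1].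
    by exists [::], i; split => //; apply: weq_refl.
  case: (eqVneq k i) => [_|H2].
    exists [:: (i, true)], i.+1; split => //; first by rewrite /wordn /= hi'.
    exact: weq_refl.
  by exists [::], k; split => //; apply: weq_refl.
- case: (eqVneq k i) => [_|H2].
    by exists [::], i.+1; split => //; apply: weq_refl.
  case: (eqVneq k i.+1) => [_|H1].
    exists [:: (i.+1, false)], i; split => //; first by rewrite /wordn /= hi.
    exact: weq_refl.
  by exists [::], k; split => //; apply: weq_refl.
Qed.

Lemma act_inRR n s u : s.1.+1 < n -> inRR n u -> inRR n (act_gen s u).
Proof.
move=> hs [k [w [b [hk [hw Hu]]]]].
have Hh := act_gen_hom s; set h := act_gen s in Hh *.
have [c [k' [hk' hc Hc]]] := gen_conj hs hk.
have Hb : weq (h [:: (k, b)]) (winv c ++ (k', b) :: c).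
  case: b {Hu}; last exact: Hc.
  have -> : (k, true) = inv_letter (k, false) by [].
  have [_ [_ ->]] := Hh.
  apply: weq_trans (weq_winv Hc) _.
  by rewrite winv_cat winv_cons winvK -catA; apply: weq_refl.
exists k', (c ++ h w), b; split => //; split.
  by rewrite wordn_cat hc wordn_act.
apply: weq_trans (hom_weq Hh Hu) _.
have [HC _] := Hh.
rewrite HC hom_winv // (hom_cons _ _ Hh) winv_cat -!catA.
apply: weq_catl.
rewrite catA; apply: (weq_trans (weq_catr _ Hb)).
rewrite -!catA /=; exact: weq_refl.
Qed.

Lemma act_fix_map s l : (forall j, j \in l -> (j != s.1) && (j != s.1.+1)) ->
  act_gen s [seq (j, false) | j <- l] = [seq (j, false) | j <- l].
Proof.
case: s => i e /=.
elim: l => [|j l IH] H; first by [].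
rewrite map_cons (hom_cons (j, false) _ (act_gen_hom _)) IH; last by move=> x hx; apply: H; rewrite inE hx orbT.
have /andP[/negbTE h1 /negbTE h2] := H j (mem_head _ _).
rewrite /act_gen /= /act_letter /= /gen_image.
by clear IH; case: e; rewrite /= ?h1 ?h2.
Qed.

Lemma act_gcox n s : s.1.+1 < n -> weq (act_gen s (gcox n)) (gcox n).
Proof.
case: s => i e /= hi.
have En : n = i + (2 + (n - i.+2)) by rewrite addnA addn2 subnKC.
rewrite /gcox En !iotaD !map_cat.
have [HC _] := act_gen_hom (i, e).
rewrite !HC.
rewrite act_fix_map; last first.
  move=> j; rewrite mem_iota => /andP[_ hj].
  by rewrite (ltn_eqF (leq_trans hj _)) ?(ltn_eqF (leq_trans hj _)) // add0n // leqW.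
rewrite [act_gen _ [seq _ | _ <- iota (0 + i + 2) _]]act_fix_map; last first.
  move=> j; rewrite mem_iota add0n addn2 => /andP[hj _].
  by rewrite !gtn_eqF // (leq_trans _ hj).
apply: weq_catl; apply: weq_catr.
clear HC; rewrite add0n /= /weq /act_gen; case: e; wsimp; done.
Qed.

Definition good n h := [/\ hom h, (forall w, wordn n w -> wordn n (h w)),
  (forall u, inRR n u -> inRR n (h u)) & weq (h (gcox n)) (gcox n)].

Lemma bact_good n tau : braid_word n tau -> good n (bact tau).
Proof.
elim: tau => [|s tau IH] /=.
  by move=> _; split; [exact: (bact_hom [::]) | by [] | by [] | exact: weq_refl].
case/andP=> hs /IH [H1 H2 H3 H4]; split.
- exact: (bact_hom (s :: tau)).
- by move=> w /H2; apply: wordn_act.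
- by move=> u /H3; apply: act_inRR.
- apply: weq_trans _ (act_gcox hs).
  exact: hom_weq (act_gen_hom s) H4.
Qed.

Lemma binv_braid n tau : braid_word n tau -> braid_word n (binv tau).
Proof. by rewrite /braid_word /binv all_rev all_map. Qed.

Lemma inRR_weq n u v : weq u v -> inRR n u -> inRR n v.
Proof.
move=> E [k [w [b [hk [hw Hu]]]]]; exists k, w, b; split => //; split => //.
exact: weq_trans (weq_sym E) Hu.
Qed.

Lemma prodR_weq n k a b : weq a b -> prodR n k a -> prodR n k b.
Proof.
move=> E [xs [Hs [Hx Hf]]]; exists xs; split => //; split => //.
exact: weq_trans Hf E.
Qed.

Lemma prodR_good n h k a : good n h -> prodR n k a -> prodR n k (h a).
Proof.
move=> [H1 H2 H3 H4] [xs [Hs [Hx Hf]]]; exists (map h xs); split.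
  by rewrite size_map.
split.
  by move=> x /mapP [y hy ->]; apply: H3; apply: Hx.
rewrite -hom_flatten //; exact: hom_weq.
Qed.

Lemma ellR_weq n a b k : weq a b -> ellR n a k -> ellR n b k.
Proof.
move=> E [H1 H2]; split; first exact: prodR_weq H1.
by move=> m /(prodR_weq (weq_sym E)) /H2.
Qed.

Lemma ellR_iso n h1 h2 (G1 : good n h1) (G2 : good n h2)
  (K : forall w, weq (h2 (h1 w)) w) a k : ellR n a k <-> ellR n (h1 a) k.
Proof.
split.
  move=> [P M]; split; first exact: prodR_good P.
  move=> m /(prodR_good G2) /(prodR_weq (K a)); exact: M.
move=> [P M]; split.
  exact: prodR_weq (K a) (prodR_good G2 P).
by move=> m /(prodR_good G1) /M.
Qed.

Lemma leR_iso n h1 h2 (G1 : good n h1) (G2 : good n h2)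
  (K : forall w, weq (h2 (h1 w)) w) a b : leR n a b <-> leR n (h1 a) (h1 b).
Proof.
have [H _ _ _] := G1; have [HC _] := H.
have E : winv (h1 a) ++ h1 b = h1 (winv a ++ b) by rewrite HC hom_winv.
split => -[ka [kab [kb [Ha [Hab [Hb Hk]]]]]]; exists ka, kab, kb.
  rewrite E; split; first exact: (ellR_iso G1 G2 K a ka).1.
  split; first exact: (ellR_iso G1 G2 K _ kab).1.
  by split; first exact: (ellR_iso G1 G2 K b kb).1.
rewrite E in Hab; split; first exact: (ellR_iso G1 G2 K a ka).2.
split; first exact: (ellR_iso G1 G2 K _ kab).2.
by split; first exact: (ellR_iso G1 G2 K b kb).2.
Qed.

Lemma leR_weqr n a b b' : weq b b' -> leR n a b -> leR n a b'.
Proof.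
move=> E [ka [kab [kb [Ha [Hab [Hb Hk]]]]]]; exists ka, kab, kb; split => //.
split; first exact: ellR_weq (weq_catl _ E) Hab.
split => //; exact: ellR_weq E Hb.
Qed.

Theorem corollary4p3 (n : nat) (tau : seq (nat * bool)) :
  braid_word n tau ->
  (* maps [1,g]_R into [1,g]_R *)
  (forall a, wordn n a -> inI n a -> inI n (bact tau a)) /\
  (* injective *)
  (forall a b, wordn n a -> wordn n b -> inI n a -> inI n b ->
     weq (bact tau a) (bact tau b) -> weq a b) /\
  (* surjective onto [1,g]_R *)
  (forall b, wordn n b -> inI n b ->
     exists a, wordn n a /\ inI n a /\ weq (bact tau a) b) /\
  (* order preserving and reflecting *)
  (forall a b, wordn n a -> wordn n b -> inI n a -> inI n b ->
     (leR n a b <-> leR n (bact tau a) (bact tau b))).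
Proof.
move=> Hb.
have G1 := bact_good Hb.
have G2 := bact_good (binv_braid Hb).
have K1 := bact_binv tau.
have K2 := bact_binv' tau.
have MapI : forall h1 h2, good n h1 -> good n h2 -> (forall w, weq (h2 (h1 w)) w) ->
    forall a, inI n a -> inI n (h1 a).
  move=> h1 h2 g1 g2 k a Ha.
  have [_ _ _ Hg] := g1.
  apply: leR_weqr Hg _; exact: ((leR_iso g1 g2 k a (gcox n)).1 Ha).
split; first by move=> a _; apply: (MapI _ _ G1 G2 K1).
split.
  move=> a b _ _ _ _ E.
  apply: weq_trans (weq_sym (K1 a)) _.
  apply: weq_trans (K1 b).
  exact: hom_weq (bact_hom _) E.
split.
  move=> b hb Ib; exists (bact (binv tau) b); split.
    by have [_ H2 _ _] := G2; apply: H2.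
  by split; [apply: (MapI _ _ G2 G1 K2) | apply: K2].
by move=> a b _ _ _ _; apply: (leR_iso G1 G2 K1).
Qed.
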